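(* In any tree $T=(V,E)$, $$n_T(\mathcal{L}_5)=\frac12\sum_{st\in E}\big(g_2(s,t)+g_2(t,s)\big),\qquad g_2(s,t)=(k_t-1)(\xi(s)-k_t-k_s+1).$$
   Context: $k_x$ is the degree of $x$, $\xi(s)=\sum_{t\in\Gamma(s)}k_t$ the sum of the degrees of the neighbours of $s$. $\mathcal{L}_5$ is the path on 5 vertices and $n_T(\mathcal{L}_5)$ the number of subgraphs of $T$ isomorphic to it. *)

(* Defs.v *)
From HB Require Import structures.
From mathcomp Require Import all_boot all_order all_algebra.
Set Implicit Arguments. Unset Strict Implicit. Unset Printing Implicit Defensive.
Import GRing.Theory Num.Theory.

Definition simple_graph (V : finType) (e : rel V) : Prop :=
  symmetric e /\ irreflexive e.

Definition has_cycle (V : finType) (e : rel V) : Prop :=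
  exists (x : V) (p : seq V),
    [/\ 2 <= size p, uniq (x :: p), path e x p & e (last x p) x].

Definition is_tree (V : finType) (e : rel V) : Prop :=
  [/\ simple_graph e, (forall x y, connect e x y) & ~ has_cycle e].

Definition edges (V : finType) (e : rel V) : {set {set V}} :=
  [set [set x; y] | x in V, y in V & e x y].

Definition deg (V : finType) (e : rel V) (x : V) : nat := #|[set y | e x y]|.

Definition xi (V : finType) (e : rel V) (s : V) : nat :=
  \sum_(t | e s t) deg e t.

Definition g2 (V : finType) (e : rel V) (s t : V) : int :=
  ((deg e t)%:Z - 1) * ((xi e s)%:Z - (deg e t)%:Z - (deg e s)%:Z + 1).

(* A subgraph (W, F) of the graph (vertex set W, edge set F) is isomorphic to
   the path L_5 on 5 vertices iff there is an injective f : 'I_5 -> V with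
   W = f('I_5), and F = { {f i, f (i+1)} | i < 4 } contained in the edge set. *)
Definition is_L5_subgraph (V : finType) (e : rel V) (WF : {set V} * {set {set V}}) : bool :=
  (WF.2 \subset edges e) &&
  [exists f : {ffun 'I_5 -> V},
     [&& injectiveb f,
         WF.1 == [set f i | i : 'I_5] &
         WF.2 == [set [set f (inord i); f (inord i.+1)] | i : 'I_4]]].

Definition nL5 (V : finType) (e : rel V) : nat :=
  #|[set WF | is_L5_subgraph e WF]|.

(* Main.v *)
Require Import Defs.
From HB Require Import structures.
From mathcomp Require Import all_boot all_order all_algebra zify.
Import GRing.Theory Num.Theory.
Unset Implicit Arguments.

Section Comb.
Variables (V : finType) (e : rel V).
Hypotheses (esym : symmetric e) (eirr : irreflexive e).

Definition T5 := (V * V * V * V * V)%type.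
Definition sq (q : T5) : seq V := let: (a,b,c,d,x) := q in [:: a; b; c; d; x].
Definition fq (q : T5) : {ffun 'I_5 -> V} := [ffun i : 'I_5 => nth q.2 (sq q) i].
Definition goodq (q : T5) : bool := let: (a,b,c,d,x) := q in
  [&& e a b, e b c, e c d, e d x & uniq [:: a; b; c; d; x]].
Definition Phi (f : {ffun 'I_5 -> V}) : {set V} * {set {set V}} :=
  ([set f i | i : 'I_5], [set [set f (inord i); f (inord i.+1)] | i : 'I_4]).
Definition revq (q : T5) : T5 := let: (a,b,c,d,x) := q in (x,d,c,b,a).

Lemma size_sq q : size (sq q) = 5.
Proof. by case: q => [[[[a b] c] d] x]. Qed.

Lemma fqE x0 q (i : 'I_5) : fq q i = nth x0 (sq q) i.
Proof. by rewrite ffunE (set_nth_default x0) // size_sq. Qed.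

Lemma fqE' x0 q k : k < 5 -> fq q (inord k) = nth x0 (sq q) k.
Proof. by move=> Hk; rewrite (fqE x0) inordK. Qed.

Lemma memW q v : (v \in [set fq q i | i : 'I_5]) = (v \in sq q).
Proof.
apply/imsetP/idP => [[i _ ->]|].
  by rewrite (fqE v) mem_nth // size_sq.
move/(nthP v) => [i Hi <-]; rewrite size_sq in Hi.
by exists (Ordinal Hi) => //; rewrite (fqE v).
Qed.

Lemma memF x0 q E : (E \in [set [set fq q (inord i); fq q (inord i.+1)] | i : 'I_4])
  = [exists k : 'I_4, E == [set nth x0 (sq q) k; nth x0 (sq q) k.+1]].
Proof.
apply/imsetP/existsP => [[k _ ->]|[k /eqP ->]]; exists k => //.
  by have Hk := ltn_ord k; rewrite !(fqE' x0) ?eqxx //; lia.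
by have Hk := ltn_ord k; rewrite !(fqE' x0) //; lia.
Qed.

Lemma revqK : involutive revq.
Proof. by case=> [[[[a b] c] d] x]. Qed.

Lemma sq_rev q : sq (revq q) = rev (sq q).
Proof. by case: q => [[[[a b] c] d] x]. Qed.

Lemma Phi_rev q : Phi (fq (revq q)) = Phi (fq q).
Proof.
rewrite /Phi; congr (_, _); apply/setP => E.
  by rewrite !memW sq_rev mem_rev.
case: q => [[[[a b] c] d] x].
rewrite !(memF a) /=.
apply/existsP/existsP => [[k]|[k]].
  case: k => [[|[|[|[|k]]]] Hk] //= /eqP ->.
  - by exists (Ordinal (isT : 3 < 4)); rewrite /= setUC.
  - by exists (Ordinal (isT : 2 < 4)); rewrite /= setUC.
  - by exists (Ordinal (isT : 1 < 4)); rewrite /= setUC.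
  - by exists (Ordinal (isT : 0 < 4)); rewrite /= setUC.
case: k => [[|[|[|[|k]]]] Hk] //= /eqP ->.
- by exists (Ordinal (isT : 3 < 4)); rewrite /= setUC.
- by exists (Ordinal (isT : 2 < 4)); rewrite /= setUC.
- by exists (Ordinal (isT : 1 < 4)); rewrite /= setUC.
- by exists (Ordinal (isT : 0 < 4)); rewrite /= setUC.
Qed.


Lemma lia5 (j0 j1 j2 j3 j4 : nat) :
  j0 < 5 -> j1 < 5 -> j2 < 5 -> j3 < 5 -> j4 < 5 ->
  j0 <> j2 -> j1 <> j3 -> j2 <> j4 ->
  (j1 = j0.+1 \/ j0 = j1.+1) -> (j2 = j1.+1 \/ j1 = j2.+1) ->
  (j3 = j2.+1 \/ j2 = j3.+1) -> (j4 = j3.+1 \/ j3 = j4.+1) ->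
  (j0 = 0 /\ j1 = 1 /\ j2 = 2 /\ j3 = 3 /\ j4 = 4) \/
  (j0 = 4 /\ j1 = 3 /\ j2 = 2 /\ j3 = 1 /\ j4 = 0).
Proof.
move=> h0 h1 h2 h3 h4 d02 d13 d24 [] H1 [] H2 [] H3 [] H4; lia.
Qed.


Lemma key x0 (s s' : seq V) : size s = 5 -> size s' = 5 -> uniq s -> uniq s' ->
  {subset s' <= s} ->
  (forall i, i < 4 -> exists2 k, k < 4 &
     [set nth x0 s' i; nth x0 s' i.+1] = [set nth x0 s k; nth x0 s k.+1]) ->
  s' = s \/ s' = rev s.
Proof.
move=> Hs Hs' Us Us' sub Hk.
pose j i := index (nth x0 s' i) s.
have jlt i : i < 5 -> j i < 5.
  by move=> Hi; rewrite -Hs index_mem; apply: sub; rewrite mem_nth ?Hs'.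
have jE i : i < 5 -> nth x0 s (j i) = nth x0 s' i.
  by move=> Hi; rewrite nth_index //; apply: sub; rewrite mem_nth ?Hs'.
have ninj (l : seq V) a b : size l = 5 -> uniq l -> a < 5 -> b < 5 ->
    nth x0 l a = nth x0 l b -> a = b.
  by move=> Hl Ul Ha Hb /eqP; rewrite nth_uniq ?Hl // => /eqP.
have jinj i1 i2 : i1 < 5 -> i2 < 5 -> j i1 = j i2 -> i1 = i2.
  move=> H1 H2 Hj; apply: (ninj s') => //.
  by rewrite -(jE i1) // -(jE i2) // Hj.
have step i : i < 4 -> j i.+1 = (j i).+1 \/ j i = (j i.+1).+1.
  move=> Hi; have [k Hk4 E] := Hk i Hi.
  have Hi5 : i < 5 by lia.
  have Hi5' : i.+1 < 5 by lia.
  have Hk5 : k < 5 by lia.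
  have Hk5' : k.+1 < 5 by lia.
  have A : k = j i \/ k = j i.+1.
    move: (set21 (nth x0 s k) (nth x0 s k.+1)).
    rewrite -E !inE -(jE i) // -(jE i.+1) //.
    by case/orP => /eqP H; [left|right]; apply: (ninj s) => //; apply: jlt.
  have B : k.+1 = j i \/ k.+1 = j i.+1.
    move: (set22 (nth x0 s k) (nth x0 s k.+1)).
    rewrite -E !inE -(jE i) // -(jE i.+1) //.
    by case/orP => /eqP H; [left|right]; apply: (ninj s) => //; apply: jlt.
  lia.
have := @lia5 (j 0) (j 1) (j 2) (j 3) (j 4) (jlt 0 isT) (jlt 1 isT) (jlt 2 isT) (jlt 3 isT) (jlt 4 isT)
  (fun h => (ltac:(discriminate (jinj 0 2 isT isT h)))) (fun h => (ltac:(discriminate (jinj 1 3 isT isT h))))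
  (fun h => (ltac:(discriminate (jinj 2 4 isT isT h)))) (step 0 isT) (step 1 isT) (step 2 isT) (step 3 isT).
move=> [[h0 [h1 [h2 [h3 h4]]]]|[h0 [h1 [h2 [h3 h4]]]]].
  left; apply: (eq_from_nth (x0:=x0)); first by rewrite Hs Hs'.
  move=> i; rewrite Hs' => Hi; rewrite -jE //.
  by case: i Hi => [|[|[|[|[|i]]]]] //= _; rewrite ?h0 ?h1 ?h2 ?h3 ?h4.
right; apply: (eq_from_nth (x0:=x0)); first by rewrite size_rev Hs Hs'.
move=> i; rewrite Hs' => Hi; rewrite -jE // nth_rev Hs //.
by case: i Hi => [|[|[|[|[|i]]]]] //= _; rewrite ?h0 ?h1 ?h2 ?h3 ?h4.
Qed.


Lemma good_uniq q : goodq q -> uniq (sq q).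
Proof. by case: q => [[[[a b] c] d] x] /and5P []. Qed.

Lemma sq_inj : injective sq.
Proof.
by case=> [[[[a b] c] d] x] [[[[a' b'] c'] d'] x'] [-> -> -> -> ->].
Qed.

Lemma Phi_inj q q' : goodq q -> goodq q' -> Phi (fq q) = Phi (fq q') ->
  q' = q \/ q' = revq q.
Proof.
move=> Gq Gq' [EW EF].
have := @key q.2 (sq q) (sq q') (size_sq q) (size_sq q') (good_uniq _ Gq) (good_uniq _ Gq').
case.
- by move=> v; rewrite -memW -EW memW.
- move=> i Hi.
  have : [set nth q.2 (sq q') i; nth q.2 (sq q') i.+1] \in
     [set [set fq q' (inord i); fq q' (inord i.+1)] | i : 'I_4].
    by rewrite (memF q.2); apply/existsP; exists (Ordinal Hi).
  rewrite -EF (memF q.2) => /existsP [k /eqP ->].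
  by exists k.
- by move/sq_inj; left.
- by rewrite -sq_rev => /sq_inj; right.
Qed.


Lemma edges_mem x y : e x y -> [set x; y] \in edges e.
Proof. by move=> exy; apply: imset2_f; rewrite ?inE. Qed.

Lemma edges_e u v : [set u; v] \in edges e -> e u v.
Proof.
case/imset2P => x y _; rewrite inE /= => exy E.
have hu : u \in [set x; y] by rewrite -E set21.
have hv : v \in [set x; y] by rewrite -E set22.
have hy : y \in [set u; v] by rewrite E set22.
have hx : x \in [set u; v] by rewrite E set21.
move: hu hv hy hx; rewrite !inE => /orP[]/eqP-> /orP[]/eqP-> /orP[]/eqP yx /orP[]/eqP xy; subst; by [|rewrite esym].
Qed.

Lemma S_eq : [set WF | is_L5_subgraph e WF] = [set Phi (fq q) | q in [set q | goodq q]].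
Proof.
apply/setP => [[W F]]; rewrite inE /is_L5_subgraph /=; apply/idP/imsetP.
  move=> /andP [Fsub /existsP [f /and3P [finj /eqP EW /eqP EF]]].
  pose q : T5 := (f (inord 0), f (inord 1), f (inord 2), f (inord 3), f (inord 4)).
  have fqq : fq q = f.
    apply/ffunP => i; rewrite (fqE (f i)).
    by case: i => [[|[|[|[|[|i]]]]] Hi] //=; congr (f _); apply: val_inj; rewrite /= inordK.
  have Ed k : k < 4 -> e (f (inord k)) (f (inord k.+1)).
    move=> Hk; apply: edges_e; apply: (subsetP Fsub) => /=; rewrite EF.
    by apply/imsetP; exists (Ordinal Hk).
  exists q; last by rewrite fqq EW EF.
  rewrite inE; apply/and5P; split; try by apply: Ed.
  have -> : [:: f (inord 0); f (inord 1); f (inord 2); f (inord 3); f (inord 4)]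
     = map f [:: inord 0; inord 1; inord 2; inord 3; inord 4] by [].
  rewrite (map_inj_uniq (injectiveP _ finj)) /= !inE -!(inj_eq val_inj) /= !inordK //.
case=> q; rewrite inE /Phi => Gq [-> ->]; apply/andP; split.
  apply/subsetP => E; rewrite /Phi /= (memF q.2) => /existsP [k /eqP ->].
  case: q Gq => [[[[a b] c] d] x] /and5P [h1 h2 h3 h4 _].
  by case: k => [[|[|[|[|k]]]] Hk] //=; apply: edges_mem.
apply/existsP; exists (fq q); rewrite !eqxx !andbT.
apply/injectiveP => i j; rewrite !(fqE q.2) => /eqP.
by rewrite nth_uniq ?size_sq ?good_uniq // => /eqP /val_inj.
Qed.


Lemma good_rev q : goodq q -> goodq (revq q).
Proof.
case: q => [[[[a b] c] d] x] /and5P [h1 h2 h3 h4 u]; apply/and5P; split; rewrite 1?esym //.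
by move: u; rewrite -rev_uniq /rev /=.
Qed.

Lemma good_ends q : goodq q -> enum_rank q.1.1.1.1 != enum_rank q.2.
Proof.
rewrite (inj_eq enum_rank_inj).
case: q => [[[[a b] c] d] x] /and5P [_ _ _ _] /=; rewrite !inE !negb_or => /and5P [/and4P [_ _ _ H] _ _ _ _] //.
Qed.

Definition P := [set q | goodq q].
Definition P0 := [set q in P | (enum_rank q.1.1.1.1 < enum_rank q.2)%N].

Lemma revq_ends q : (revq q).1.1.1.1 = q.2 /\ (revq q).2 = q.1.1.1.1.
Proof. by case: q => [[[[a b] c] d] x]. Qed.

Lemma P0_rev q : q \in P -> (q \notin P0) = (revq q \in P0).
Proof.
rewrite !inE => Gq; rewrite Gq good_rev //=.
have [h1 h2] := revq_ends q; rewrite h1 h2.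
move: (good_ends _ Gq); case: ltngtP => //= E.
by rewrite (val_inj E) eqxx.
Qed.

Lemma nL5_P0 : nL5 e = #|P0|.
Proof.
rewrite /nL5 S_eq -/P.
have -> : [set Phi (fq q) | q in P] = [set Phi (fq q) | q in P0].
  apply/setP => WF; apply/imsetP/imsetP => [[q Pq ->]|[q P0q ->]].
    case: (boolP (q \in P0)) => Hq; first by exists q.
    by exists (revq q); [rewrite -P0_rev | rewrite Phi_rev].
  by exists q => //; move: P0q; rewrite inE => /andP [].
apply: card_in_imset => q q'; rewrite !inE => /andP [Gq r] /andP [Gq' r'] E.
case: (Phi_inj _ _ Gq Gq' E) => [->//|Hq].
move: r'; have [h1 h2] := revq_ends q; rewrite Hq h1 h2 => r'.
by have := ltn_trans r r'; rewrite ltnn.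
Qed.

Lemma cardP : #|P| = 2 * #|P0|.
Proof.
rewrite -(cardsID P0 P).
have -> : P :&: P0 = P0 by apply/setIidPr/subsetP => q; rewrite inE => /andP [].
have -> : P :\: P0 = revq @: P0.
  apply/setP => q; rewrite inE; apply/andP/imsetP => [[nq Pq]|[q' P0q' ->]].
    by exists (revq q); [rewrite -P0_rev | rewrite revqK].
  have Pq' : q' \in P by move: P0q'; rewrite inE => /andP [].
  split; last by move: Pq'; rewrite !inE; apply: good_rev.
  rewrite -(revqK q') in P0q'; rewrite P0_rev // inE; apply: good_rev; by move: Pq'; rewrite inE.
by rewrite card_imset ?addnn ?mul2n //; apply: (can_inj revqK).
Qed.


Hypothesis nocyc : ~ has_cycle e.

Lemma no3 a b c : e a b -> e b c -> e c a -> uniq [:: a; b; c] -> False.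
Proof.
move=> h1 h2 h3 u; apply: nocyc; exists a, [:: b; c]; split => //=.
by rewrite h1 h2.
Qed.

Lemma no4 a b c d : e a b -> e b c -> e c d -> e d a -> uniq [:: a; b; c; d] -> False.
Proof.
move=> h1 h2 h3 h4 u; apply: nocyc; exists a, [:: b; c; d]; split => //=.
by rewrite h1 h2 h3.
Qed.

Lemma goodE a b c d x : goodq (a, b, c, d, x) =
  [&& e b a, a != c, e c b, e c d, b != d, e d x & x != c].
Proof.
rewrite /goodq (esym b a) (esym c b).
apply/and5P/and5P => [[h1 h2 h3 h4 u]|].
  move: u; rewrite /= !inE !negb_or => /and5P [/and4P [_ ac _ _] /and3P [_ bd _] /andP [_ cx] _ _].
  by rewrite h1 h2 h3 h4 ac bd eq_sym cx.
case=> h1 ac h2 h3 /and3P [bd edx xc]; split => //.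
have ab : a != b by apply/eqP => E; move: h1; rewrite E eirr.
have bc : b != c by apply/eqP => E; move: h2; rewrite E eirr.
have cd : c != d by apply/eqP => E; move: h3; rewrite E eirr.
have dx : d != x by apply/eqP => E; move: edx; rewrite E eirr.
have ad : a != d.
  apply/eqP => E; subst d; apply: (no3 _ _ _ h1 h2 h3).
  by rewrite /= !inE negb_or ab ac bc.
have bx : b != x.
  apply/eqP => E; subst x; apply: (no3 _ _ _ h2 h3 edx).
  by rewrite /= !inE negb_or bc bd cd.
have ax : a != x.
  apply/eqP => E; subst x; apply: (no4 _ _ _ _ h1 h2 h3 edx).
  by rewrite /= !inE !negb_or ab ac ad bc bd cd.
by rewrite /= !inE !negb_or ab ac ad ax bc bd bx cd dx eq_sym xc.
Qed.


Lemma sum_pair (I J : finType) (F : I * J -> nat) :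
  \sum_(q : I * J) F q = \sum_(i : I) \sum_(j : J) F (i, j).
Proof. by rewrite pair_bigA; apply: eq_bigr => -[]. Qed.

Lemma sum_T5 (F : T5 -> nat) : \sum_(q : T5) F q =
  \sum_a \sum_b \sum_c \sum_d \sum_x F (a, b, c, d, x).
Proof.
rewrite sum_pair (@sum_pair _ _ (fun p => \sum_x F (p, x))).
rewrite (@sum_pair _ _ (fun p => \sum_d \sum_x F (p, d, x))).
rewrite (@sum_pair _ _ (fun p => \sum_c \sum_d \sum_x F (p, c, d, x))).
by [].
Qed.

Definition Nb t s := \sum_a ((e t a && (a != s)) : nat).

Lemma cardP_sum : #|P| = \sum_c \sum_b \sum_d
   ((e c b && e c d && (b != d)) * Nb b c * Nb d c).
Proof.
rewrite /P -sum1dep_card big_mkcond /= sum_T5.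
have E a b c d x : (if goodq (a, b, c, d, x) then 1 else 0) =
   (e b a && (a != c)) * ((e c b && e c d && (b != d)) * (e d x && (x != c))).
  by rewrite goodE; case: (e b a); case: (a != c); case: (e c b); case: (e c d); case: (b != d); case: (e d x); case: (x != c).
transitivity (\sum_a \sum_b \sum_c \sum_d
   ((e b a && (a != c)) * ((e c b && e c d && (b != d)) * Nb d c))).
  apply: eq_bigr => a _; apply: eq_bigr => b _; apply: eq_bigr => c _; apply: eq_bigr => d _.
  by rewrite /Nb big_distrr big_distrr /=; apply: eq_bigr => x _; exact: E.
rewrite exchange_big /=.
rewrite (eq_bigr (fun b => \sum_c \sum_d Nb b c * ((e c b && e c d && (b != d)) * Nb d c))); last first.
  move=> b _; rewrite exchange_big; apply: eq_bigr => c _; rewrite exchange_big.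
  by apply: eq_bigr => d _; rewrite /Nb big_distrl.
rewrite exchange_big; apply: eq_bigr => c _; apply: eq_bigr => b _; apply: eq_bigr => d _.
by rewrite mulnCA mulnA.
Qed.


Definition Xs s t := \sum_(d | e s d && (d != t)) Nb d s.

Lemma degE t : deg e t = \sum_y (e t y : nat).
Proof. by rewrite /deg -sum1dep_card big_mkcond; apply: eq_bigr => y _; case: (e t y). Qed.

Lemma Nb_eq t s : e t s -> deg e t = (Nb t s).+1.
Proof.
move=> ets; rewrite degE (bigD1 s) //= ets add1n; congr S.
by rewrite /Nb big_mkcond; apply: eq_bigr => y _ /=; case: (e t y); case: (y != s).
Qed.

Lemma cardP_sum2 : #|P| = \sum_s \sum_(t | e s t) Nb t s * Xs s t.
Proof.
rewrite cardP_sum; apply: eq_bigr => c _.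
rewrite [RHS]big_mkcond; apply: eq_bigr => b _ /=.
case: (boolP (e c b)) => ecb /=; last by rewrite big1 // => d _; rewrite (negbTE ecb).
rewrite /Xs big_distrr [RHS]big_mkcond /=; apply: eq_bigr => d _.
by rewrite (eq_sym b d); case: (e c d); case: (d != b); rewrite /= ?muln0 ?mul0n ?mul1n ?muln1 // mulnC.
Qed.

Lemma xi_eq s t : e s t ->
  ((xi e s)%:Z - (deg e t)%:Z - (deg e s)%:Z + 1 = (Xs s t)%:Z)%R.
Proof.
move=> est.
have H1 : xi e s = deg e t + \sum_(d | e s d && (d != t)) deg e d.
  by rewrite /xi (bigD1 t).
have H2 : \sum_(d | e s d && (d != t)) deg e d =
    Xs s t + \sum_(d | e s d && (d != t)) 1.
  rewrite /Xs -big_split /=; apply: eq_bigr => d /andP [esd _].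
  by rewrite (Nb_eq d s) ?addn1 // esym.
have H3 : deg e s = 1 + \sum_(d | e s d && (d != t)) 1.
  rewrite degE (bigD1 t) //= est; congr (_ + _).
  by rewrite big_mkcond [RHS]big_mkcond; apply: eq_bigr => y _ /=; case: (e s y); case: (y != t).
rewrite H1 H2 H3; lia.
Qed.


Local Open Scope ring_scope.

Lemma count_int : (#|P|%:Z = \sum_s \sum_(t | e s t) g2 e s t).
Proof.
rewrite cardP_sum2 -natz natr_sum; apply: eq_bigr => s _.
rewrite natr_sum; apply: eq_bigr => t est.
rewrite natrM !natz /g2 xi_eq // (Nb_eq t s); last by rewrite esym.
by rewrite -addn1 PoszD addrK.
Qed.

Lemma sym_sum (F : V -> V -> int) :
  \sum_s \sum_(t | e s t && (enum_rank s < enum_rank t)%N) (F s t + F t s) =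
  \sum_s \sum_(t | e s t) F s t.
Proof.
rewrite (eq_bigr (fun s => \sum_(t | e s t && (enum_rank s < enum_rank t)%N) F s t +
    \sum_(t | e s t && (enum_rank s < enum_rank t)%N) F t s)); last by move=> s _; rewrite big_split.
rewrite big_split /=.
have -> : \sum_s \sum_(t | e s t && (enum_rank s < enum_rank t)%N) F t s =
          \sum_s \sum_(t | e s t && (enum_rank t < enum_rank s)%N) F s t.
  rewrite (eq_bigr (fun s => \sum_t (if e s t && (enum_rank s < enum_rank t)%N then F t s else 0)));
    last by move=> s _; rewrite big_mkcond.
  rewrite exchange_big; apply: eq_bigr => s _; rewrite [RHS]big_mkcond.
  by apply: eq_bigr => t _; rewrite (esym t s).
have pt s : \sum_(t | e s t) F s t =
    \sum_(t | e s t && (enum_rank s < enum_rank t)%N) F s t +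
    \sum_(t | e s t && (enum_rank t < enum_rank s)%N) F s t.
  rewrite big_mkcond [X in _ = X + _]big_mkcond [X in _ = _ + X]big_mkcond -big_split; apply: eq_bigr => t _ /=.
  case: (boolP (e s t)) => est /=; last by rewrite addr0.
  have : enum_rank s != enum_rank t.
    by rewrite (inj_eq enum_rank_inj); apply/eqP => E; move: est; rewrite E eirr.
  case: ltngtP => //= E; [by rewrite addr0 | by rewrite add0r | by rewrite (val_inj E) eqxx].
by rewrite (eq_bigr _ (fun s _ => pt s)) big_split.
Qed.

End Comb.

Local Open Scope ring_scope.
Theorem proposition18 (V : finType) (e : rel V) :
  is_tree e ->
  (nL5 e)%:R =
    (1 / 2 : rat) *
      (\sum_(s : V) \sum_(t : V | e s t && (enum_rank s < enum_rank t)%N)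
          ((g2 e s t + g2 e t s)%:~R : rat)).
Proof.
move=> [[sym irr] _ nc].
rewrite (nL5_P0 _ _ sym).
have -> : (\sum_(s : V) \sum_(t : V | e s t && (enum_rank s < enum_rank t)%N)
          ((g2 e s t + g2 e t s)%:~R : rat)) =
   ((\sum_(s : V) \sum_(t : V | e s t && (enum_rank s < enum_rank t)%N)
          (g2 e s t + g2 e t s))%:~R).
  by rewrite rmorph_sum; apply: eq_bigr => s _; rewrite rmorph_sum.
rewrite (sym_sum _ _ sym irr (g2 e)) -(count_int _ _ sym irr nc) (cardP _ _ sym).
by rewrite PoszM intrM mulrA div1r mulVf ?mul1r.
Qed.
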